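(* For every real constant $\alpha$, there exist a conjunctive query $Q$, a set of functional dependencies on its relations, and a database $D$ satisfying these dependencies, such that $|Q(D)| > \mathrm{rmax}(Q,D)^{\alpha\, C(chase(Q))}$.
   Context: A conjunctive query has the form $Q = R_0(u_0)\leftarrow A_1\wedge\cdots\wedge A_m$, body atoms $A_i=R_{j(i)}(u_i)$ with variable lists $u_i$; $Q(D)$ is the set of $\theta(u_0)$ over all assignments $\theta$ of universe elements to variables with $\theta(u_i)\in R_{j(i)}^D$ for all $i\ge1$; $\mathrm{rmax}(Q,D)$ is the size of the largest relation among those named in the body. A functional dependency $V\to a$ on relation $R$ is satisfied if tuples of $R^D$ agreeing on positions $V$ agree on position $a$; it induces for each atom $R(u)$ the dependency $\{u[p]:p\in V\}\to u[a]$ among query variables. $chase(Q)$ is the query obtained by the standard chase procedure (repeatedly identifying variables forced equal by the FDs among atoms of the same relation and removing duplicate atoms); it returns the same answer as $Q$ on every database satisfying the FDs. Valid coloring: a map $\mathcal{L}$ assigning to each query variable $X$ a finite set $\mathcal{L}(X)$ of colors such that for every induced dependency $X_1,\ldots,X_j\to Y$, $\mathcal{L}(Y)\subseteq\bigcup_i\mathcal{L}(X_i)$. Color number: $C(Q)=\max_{\mathcal{L}} \frac{|\bigcup_{X\in u_0}\mathcal{L}(X)|}{\max_{i\ge1}|\bigcup_{X\in u_i}\mathcal{L}(X)|}$, the maximum over valid colorings with positive denominator. *)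

(* Defs.v *)
From Stdlib Require Import Reals List Arith Relations.
Import ListNotations.
Open Scope R_scope.

(* Query variables, relation names and universe elements are all nat. *)
Record atom := mkAtom { rel : nat; args : list nat }.
Record cq := mkCQ { head : list nat; body : list atom }.   (* R0(head) <- body *)
Definition database := nat -> list (list nat).
(* functional dependency  fd_lhs -> fd_rhs  (positions) on relation fd_rel *)
Record fd := mkFD { fd_rel : nat; fd_lhs : list nat; fd_rhs : nat }.

Definition atom_eq_dec : forall a b : atom, {a = b} + {a <> b}.
Proof. decide equality; first [apply (list_eq_dec Nat.eq_dec) | apply Nat.eq_dec]. Defined.

Definition wf_query (ar : nat -> nat) (Q : cq) : Prop :=
  forall A, In A (body Q) -> length (args A) = ar (rel A).
Definition wf_db (ar : nat -> nat) (D : database) : Prop :=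
  forall R t, In t (D R) -> length t = ar R.
Definition wf_fd (ar : nat -> nat) (f : fd) : Prop :=
  (forall p, In p (fd_lhs f) -> (p < ar (fd_rel f))%nat) /\ (fd_rhs f < ar (fd_rel f))%nat.

Definition fd_sat (D : database) (f : fd) : Prop :=
  forall t t', In t (D (fd_rel f)) -> In t' (D (fd_rel f)) ->
    (forall p, In p (fd_lhs f) -> nth p t 0%nat = nth p t' 0%nat) ->
    nth (fd_rhs f) t 0%nat = nth (fd_rhs f) t' 0%nat.

Definition in_answer (Q : cq) (D : database) (t : list nat) : Prop :=
  exists theta : nat -> nat,
    (forall A, In A (body Q) -> In (map theta (args A)) (D (rel A))) /\
    t = map theta (head Q).
Definition answer_card (Q : cq) (D : database) (n : nat) : Prop :=
  exists ans : list (list nat), NoDup ans /\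
    (forall t, In t ans <-> in_answer Q D t) /\ length ans = n.

Definition rel_size (D : database) (R : nat) : nat :=
  length (nodup (list_eq_dec Nat.eq_dec) (D R)).
Definition rmax (Q : cq) (D : database) : nat :=
  fold_right max 0%nat (map (fun A => rel_size D (rel A)) (body Q)).

Definition induced (S : list fd) (Q : cq) (X : list nat) (Y : nat) : Prop :=
  exists f A, In f S /\ In A (body Q) /\ rel A = fd_rel f /\
    X = map (fun p => nth p (args A) 0%nat) (fd_lhs f) /\
    Y = nth (fd_rhs f) (args A) 0%nat.

(* colorings: each variable gets a finite set (list) of colors (nat) *)
Definition coloring := nat -> list nat.
Definition valid_coloring (S : list fd) (Q : cq) (L : coloring) : Prop :=
  forall X Y, induced S Q X Y ->
    forall c, In c (L Y) -> exists x, In x X /\ In c (L x).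
Definition ncolors (L : coloring) (vars : list nat) : nat :=
  length (nodup Nat.eq_dec (flat_map L vars)).
Definition denom (L : coloring) (Q : cq) : nat :=
  fold_right max 0%nat (map (fun A => ncolors L (args A)) (body Q)).
Definition ratio (L : coloring) (Q : cq) : R :=
  INR (ncolors L (head Q)) / INR (denom L Q).
Definition color_number (S : list fd) (Q : cq) (c : R) : Prop :=
  (exists L, valid_coloring S Q L /\ (0 < denom L Q)%nat /\ ratio L Q = c) /\
  (forall L, valid_coloring S Q L -> (0 < denom L Q)%nat -> ratio L Q <= c).

Definition subst_var (x y v : nat) : nat := if Nat.eq_dec v x then y else v.
Definition subst_atom (x y : nat) (A : atom) : atom :=
  mkAtom (rel A) (map (subst_var x y) (args A)).
Definition subst_query (x y : nat) (Q : cq) : cq :=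
  mkCQ (map (subst_var x y) (head Q))
       (nodup atom_eq_dec (map (subst_atom x y) (body Q))).
Definition chase_step (S : list fd) (Q Q' : cq) : Prop :=
  exists f A1 A2, In f S /\ In A1 (body Q) /\ In A2 (body Q) /\
    rel A1 = fd_rel f /\ rel A2 = fd_rel f /\
    (forall p, In p (fd_lhs f) -> nth p (args A1) 0%nat = nth p (args A2) 0%nat) /\
    nth (fd_rhs f) (args A2) 0%nat <> nth (fd_rhs f) (args A1) 0%nat /\
    Q' = subst_query (nth (fd_rhs f) (args A2) 0%nat) (nth (fd_rhs f) (args A1) 0%nat) Q.
Definition is_chase (S : list fd) (Q Q' : cq) : Prop :=
  clos_refl_trans cq (chase_step S) Q Q' /\ ~ (exists Q'', chase_step S Q' Q'').

(* Main.v *)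
Require Import Defs.
From Stdlib Require Import Reals List Arith Lia Bool FinFun Lra Relations Rpower.
Import ListNotations.

Fixpoint allvec (k:nat) : list (list bool) :=
  match k with 0 => [[]] | S k => map (cons false) (allvec k) ++ map (cons true) (allvec k) end.
Fixpoint ip (u s : list bool) : bool :=
  match u, s with a::u', b::s' => xorb (a && b) (ip u' s') | _, _ => false end.
Fixpoint xorv (u v : list bool) : list bool :=
  match u, v with a::u', b::v' => xorb a b :: xorv u' v' | _,_ => [] end.
Definition b2n (b:bool) : nat := if b then 1%nat else 0%nat.
Fixpoint enc (u:list bool) : nat := match u with [] => 0%nat | b::u' => (b2n b + 2 * enc u')%nat end.
Fixpoint dec (k x:nat) : list bool := match k with 0 => [] | S k => Nat.odd x :: dec k (Nat.div2 x) end.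
Definition nz (u : list bool) : bool := existsb (fun b => b) u.
Fixpoint basis k := match k with 0 => [] | S k => (true :: repeat false k) :: map (cons false) (basis k) end.

Lemma odd_b2n : forall b e, Nat.odd (b2n b + 2 * e) = b.
Proof. intros [] e; simpl b2n.
  - replace (1 + 2*e)%nat with (S (2*e)) by lia. rewrite Nat.odd_succ, Nat.even_mul. reflexivity.
  - rewrite Nat.add_0_l, Nat.odd_mul. reflexivity. Qed.
Lemma div2_b2n : forall b e, Nat.div2 (b2n b + 2 * e) = e.
Proof. intros [] e; simpl b2n.
  - replace (1 + 2*e)%nat with (S (2*e)) by lia. apply Nat.div2_succ_double.
  - rewrite Nat.add_0_l. apply Nat.div2_double. Qed.
Lemma dec_enc : forall u, dec (length u) (enc u) = u.
Proof.
  induction u as [|b u IH]; auto. change (dec (S (length u)) (b2n b + 2 * enc u) = b :: u).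
  cbn [dec]. rewrite odd_b2n, div2_b2n, IH. reflexivity.
Qed.

Lemma enc_inj : forall u v, length u = length v -> enc u = enc v -> u = v.
Proof. intros u v Hl He. rewrite <- (dec_enc u), <- (dec_enc v), Hl, He. reflexivity. Qed.

Lemma allvec_In : forall k v, In v (allvec k) <-> length v = k.
Proof.
  induction k; intros v; simpl.
  - split; [intros [<-|[]]; auto| destruct v; simpl; try discriminate; auto].
  - rewrite in_app_iff, !in_map_iff. split.
    + intros [[w [<- Hw]]|[w [<- Hw]]]; simpl; f_equal; apply IHk; auto.
    + destruct v as [|b w]; simpl; try discriminate. intros H; injection H; intros H'.
      destruct b; [right|left]; exists w; split; auto; apply IHk; auto.
Qed.

Lemma allvec_NoDup : forall k, NoDup (allvec k).
Proof.
  induction k; simpl. constructor; auto. constructor.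
  apply NoDup_app.
  - apply FinFun.Injective_map_NoDup; auto. intros a b H; injection H; auto.
  - apply FinFun.Injective_map_NoDup; auto. intros a b H; injection H; auto.
  - intros a Ha Hb. apply in_map_iff in Ha, Hb. destruct Ha as [x [<- _]]; destruct Hb as [y [H _]]; discriminate.
Qed.

Lemma allvec_length : forall k, length (allvec k) = (2^k)%nat.
Proof. induction k; simpl; auto. rewrite length_app, !length_map, IHk. lia. Qed.

Lemma ip_xorv : forall u v s, length u = length v -> ip (xorv u v) s = xorb (ip u s) (ip v s).
Proof.
  induction u as [|a u IH]; intros [|b v] s H; simpl in *; try discriminate; auto.
  destruct s as [|c s]; simpl; auto. rewrite IH by lia.
  destruct a, b, c, (ip u s), (ip v s); reflexivity.
Qed.

Lemma xorv_length : forall u v, length u = length v -> length (xorv u v) = length u.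
Proof. induction u; intros [|b v] H; simpl in *; try discriminate; auto. Qed.

Lemma xorv_cancel : forall u v, length u = length v -> xorv u (xorv u v) = v.
Proof. induction u as [|a u IH]; intros [|b v] H; simpl in *; try discriminate; auto.
  rewrite IH by lia. destruct a, b; reflexivity. Qed.

Lemma xorv_comm : forall u v, xorv u v = xorv v u.
Proof. induction u; intros [|b v]; simpl; auto. rewrite IHu, xorb_comm; auto. Qed.

Lemma nz_xorv : forall u v, length u = length v -> nz (xorv u v) = false -> u = v.
Proof. induction u as [|a u IH]; intros [|b v] H; simpl in *; try discriminate; auto.
  intros Hn. apply orb_false_iff in Hn. destruct Hn as [H1 H2]. rewrite (IH v) by (auto; lia).
  destruct a, b; simpl in H1; try discriminate; auto. Qed.

Lemma xorv_self_nz : forall u v, length u = length v -> nz v = true -> xorv u v <> u.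
Proof. induction u as [|a u IH]; intros [|b v] Hl H; simpl in *; try discriminate; auto.
  intros E. inversion E as [[E1 E2]]. apply orb_true_iff in H. destruct H as [H|H].
  - subst b; destruct a; discriminate.
  - exact (IH v ltac:(lia) H E2). Qed.

Lemma sum_map_add : forall {A} (f g : A -> nat) l,
  list_sum (map (fun x => f x + g x)%nat l) = (list_sum (map f l) + list_sum (map g l))%nat.
Proof. induction l; simpl; auto. rewrite IHl. lia. Qed.

Lemma sum_map_ext : forall {A} (f g : A -> nat) l, (forall x, f x = g x) ->
  list_sum (map f l) = list_sum (map g l).
Proof. intros. f_equal. apply map_ext. auto. Qed.

Lemma length_filter_sum : forall {A} (f : A -> bool) l,
  length (filter f l) = list_sum (map (fun x => b2n (f x)) l).
Proof. induction l; simpl; auto. destruct (f a); simpl; lia. Qed.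

Lemma sum_const : forall {A} c (l : list A), list_sum (map (fun _ => c) l) = (c * length l)%nat.
Proof. induction l; simpl; lia. Qed.

Lemma sum_allvec_S : forall k (g : list bool -> nat),
  list_sum (map g (allvec (S k))) = (list_sum (map (fun s => g (false::s)) (allvec k)) + list_sum (map (fun s => g (true::s)) (allvec k)))%nat.
Proof. intros. simpl. rewrite map_app, list_sum_app, !map_map. reflexivity. Qed.

Lemma ip_zero : forall u s, nz u = false -> ip u s = false.
Proof. induction u as [|a u IH]; intros [|c s] H; simpl in *; auto.
  apply orb_false_iff in H. destruct H as [-> H]. simpl. auto. Qed.

Lemma count_ip : forall u, nz u = true ->
  list_sum (map (fun s => b2n (ip u s)) (allvec (length u))) = (2 ^ (length u - 1))%nat.
Proof.
  induction u as [|a u IH]; simpl length; intros H; [discriminate|].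
  rewrite sum_allvec_S. simpl ip.
  destruct (nz u) eqn:Hu.
  - specialize (IH eq_refl).
    assert (length u <> 0%nat) by (destruct u; simpl in *; discriminate || lia).
    rewrite (sum_map_ext (fun s => b2n (xorb (a && false) (ip u s))) (fun s => b2n (ip u s))) by (intros; destruct a; reflexivity).
    destruct a.
    + rewrite (sum_map_ext (fun s => b2n (xorb (true && true) (ip u s))) (fun s => 1 - b2n (ip u s))%nat) by (intros; destruct (ip u x); reflexivity).
      assert (forall l : list (list bool), list_sum (map (fun s => 1 - b2n (ip u s))%nat l) + list_sum (map (fun s => b2n (ip u s)) l) = length l)%nat.
      { induction l as [|x l IHl]; simpl; auto. destruct (ip u x); simpl in *; lia. }
      specialize (H1 (allvec (length u))). rewrite allvec_length in H1.
      replace (length u - 0)%nat with (length u) by lia.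
      destruct (length u); [lia|]. simpl in *. rewrite Nat.sub_0_r in IH. lia.
    + change (fun s => b2n (xorb (false && true) (ip u s))) with (fun s => b2n (ip u s)). rewrite IH. destruct (length u); [lia|]. simpl. rewrite !Nat.sub_0_r. lia.
  - simpl in H. rewrite Hu, orb_false_r in H. subst a.
    rewrite (sum_map_ext (fun s => b2n (xorb (true && false) (ip u s))) (fun _ => 0%nat)) by (intros; rewrite ip_zero; auto).
    rewrite (sum_map_ext (fun s => b2n (xorb (true && true) (ip u s))) (fun _ => 1%nat)) by (intros; rewrite ip_zero; auto).
    rewrite !sum_const, allvec_length. simpl. rewrite Nat.sub_0_r. lia.
Qed.

Lemma count_or : forall u v, length u = length v -> nz u = true -> nz v = true -> u <> v ->
  list_sum (map (fun s => b2n (ip u s || ip v s)) (allvec (length u))) = (3 * 2 ^ (length u - 2))%nat.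
Proof.
  intros u v Hl Hu Hv Huv.
  assert (Hw : nz (xorv u v) = true).
  { destruct (nz (xorv u v)) eqn:E; auto. exfalso. apply Huv. apply nz_xorv; auto. }
  pose proof (count_ip u Hu) as Cu. pose proof (count_ip v Hv) as Cv.
  pose proof (count_ip _ Hw) as Cw. rewrite xorv_length in Cw by auto. rewrite <- Hl in Cv.
  assert (E: forall s, (2 * b2n (ip u s || ip v s) = b2n (ip u s) + b2n (ip v s) + b2n (ip (xorv u v) s))%nat).
  { intros s. rewrite ip_xorv by auto. destruct (ip u s), (ip v s); reflexivity. }
  assert (T: (2 * list_sum (map (fun s => b2n (ip u s || ip v s)) (allvec (length u))) =
     list_sum (map (fun s => b2n (ip u s)) (allvec (length u))) + list_sum (map (fun s => b2n (ip v s)) (allvec (length u))) + list_sum (map (fun s => b2n (ip (xorv u v) s)) (allvec (length u))))%nat).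
  { rewrite <- !sum_map_add. rewrite <- (sum_map_ext _ _ _ E).
    generalize (allvec (length u)). induction l; simpl; auto. simpl in *; lia. }
  rewrite Cu, Cv, Cw in T.
  assert (2 <= length u)%nat.
  { destruct u as [|a [|b u]]; simpl in *; try discriminate; try lia.
  }
  assert (P: (2 ^ (length u - 1) = 2 * 2 ^ (length u - 2))%nat). { replace (length u - 1)%nat with (S (length u - 2)) by lia. reflexivity. } lia.
Qed.

Definition veqb (u v : list bool) : bool := if list_eq_dec bool_dec u v then true else false.
Definition memb (g : nat) (l : list nat) : bool := if in_dec Nat.eq_dec g l then true else false.
Definition Vnz k := filter nz (allvec k).
Definition atm (u v : list bool) : atom := mkAtom 0 [enc u; enc v; enc (xorv u v)].
Definition row k u := map (atm u) (filter (fun v => negb (veqb u v)) (Vnz k)).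
Definition bodyk k := flat_map (row k) (Vnz k).
Definition Qk k := mkCQ (map enc (basis k)) (bodyk k).
Definition f1 := mkFD 0 [0;1]%nat 2.
Definition SS := [f1].

Lemma veqb_spec : forall u v, veqb u v = true <-> u = v.
Proof. intros; unfold veqb; destruct (list_eq_dec bool_dec u v); split; congruence. Qed.
Lemma memb_spec : forall g l, memb g l = true <-> In g l.
Proof. intros; unfold memb; destruct (in_dec Nat.eq_dec g l); split; congruence || tauto. Qed.

Lemma Vnz_In : forall k u, In u (Vnz k) <-> length u = k /\ nz u = true.
Proof. intros. unfold Vnz. rewrite filter_In, allvec_In. tauto. Qed.
Lemma Vnz_NoDup : forall k, NoDup (Vnz k).
Proof. intros. apply NoDup_filter, allvec_NoDup. Qed.

Lemma body_In : forall k u v, In u (Vnz k) -> In v (Vnz k) -> u <> v -> In (atm u v) (bodyk k).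
Proof. intros. unfold bodyk. apply in_flat_map. exists u; split; auto.
  unfold row. apply in_map. apply filter_In. split; auto.
  destruct (veqb u v) eqn:E; auto. apply veqb_spec in E. contradiction. Qed.

Lemma body_In_inv : forall k A, In A (bodyk k) -> exists u v, In u (Vnz k) /\ In v (Vnz k) /\ u <> v /\ A = atm u v.
Proof. intros k A H. unfold bodyk in H. apply in_flat_map in H. destruct H as [u [Hu H]].
  unfold row in H. apply in_map_iff in H. destruct H as [v [<- Hv]]. apply filter_In in Hv.
  destruct Hv as [Hv E]. exists u, v. repeat split; auto. intros <-.
  assert (veqb u u = true) by (apply veqb_spec; auto). rewrite H in E; discriminate. Qed.

Lemma count_nz : forall k, length (Vnz k) = (2^k - 1)%nat.
Proof.
  intros k. unfold Vnz. induction k; simpl; auto.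
  rewrite filter_app, length_app.
  assert (E1: filter nz (map (cons false) (allvec k)) = map (cons false) (filter nz (allvec k))).
  { generalize (allvec k). induction l; simpl; auto. destruct (nz a); simpl; f_equal; auto. }
  assert (E2: filter nz (map (cons true) (allvec k)) = map (cons true) (allvec k)).
  { generalize (allvec k). induction l; simpl; auto. f_equal; auto. }
  rewrite E1, E2, !length_map, IHk, allvec_length.
  pose proof (Nat.pow_nonzero 2 k). lia.
Qed.

Lemma filter_neq_notin : forall (u : list bool) l, ~ In u l ->
  length (filter (fun v => negb (veqb u v)) l) = length l.
Proof. induction l; simpl; auto. intros H. destruct (veqb u a) eqn:E.
  apply veqb_spec in E. subst; tauto. simpl. rewrite IHl; auto. Qed.

Lemma filter_neq_length : forall (u : list bool) l, NoDup l -> In u l ->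
  length (filter (fun v => negb (veqb u v)) l) = (length l - 1)%nat.
Proof.
  intros u l ND. induction ND as [|x l Hx ND IH]; simpl; [tauto|].
  intros [E0|H].
  - subst x. assert (veqb u u = true) by (apply veqb_spec; auto). rewrite H. simpl.
    rewrite Nat.sub_0_r. apply filter_neq_notin; auto.
  - destruct (veqb u x) eqn:E. apply veqb_spec in E. subst; contradiction.
    simpl. rewrite IH by auto. destruct l; simpl in *; [tauto|lia].
Qed.

Lemma length_flat_map_sum : forall {A B} (r : A -> list B) l,
  length (flat_map r l) = list_sum (map (fun x => length (r x)) l).
Proof. induction l; simpl; auto. rewrite length_app, IHl. auto. Qed.

Lemma filter_flat_map_length : forall {A B} (f : B -> bool) (r : A -> list B) l,
  length (filter f (flat_map r l)) = list_sum (map (fun x => length (filter f (r x))) l).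
Proof. induction l; simpl; auto. rewrite filter_app, length_app, IHl. auto. Qed.

Lemma sum_const_in : forall {A} c (f : A -> nat) l, (forall x, In x l -> f x = c) ->
  list_sum (map f l) = (c * length l)%nat.
Proof. induction l; simpl; intros; auto. rewrite H, IHl by auto. lia. Qed.

Lemma body_length : forall k, length (bodyk k) = ((2^k-1) * (2^k - 2))%nat.
Proof.
  intros k. unfold bodyk. rewrite length_flat_map_sum.
  rewrite (sum_const_in (2^k - 2)%nat). rewrite count_nz. lia.
  intros u Hu. unfold row. rewrite length_map, filter_neq_length, count_nz; auto. lia.
  apply Vnz_NoDup.
Qed.

Lemma filter_split_length : forall {A} (f : A -> bool) l,
  (length (filter f l) + length (filter (fun x => negb (f x)) l))%nat = length l.
Proof. induction l; simpl; auto. destruct (f a); simpl; lia. Qed.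

Lemma sum_le : forall {A} (f g : A -> nat) l, (forall x, In x l -> f x <= g x)%nat ->
  (list_sum (map f l) <= list_sum (map g l))%nat.
Proof. induction l; simpl; intros H; auto. pose proof (H a (or_introl eq_refl)).
  assert (list_sum (map f l) <= list_sum (map g l))%nat by (apply IHl; intros; apply H; auto). lia. Qed.

Lemma sum_if : forall {A} (f : A -> bool) c l,
  list_sum (map (fun x => if f x then c else 0%nat) l) = (c * length (filter f l))%nat.
Proof. induction l; simpl; auto. destruct (f a); simpl; lia. Qed.

Lemma sum_swap : forall {X} (B : list X) (G : list nat) (R : X -> nat -> bool),
  list_sum (map (fun A => length (filter (R A) G)) B) =
  list_sum (map (fun g => length (filter (fun A => R A g) B)) G).
Proof.
  induction B as [|A B IH]; intros G R; simpl.
  - induction G; simpl; auto.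
  - rewrite IH. rewrite length_filter_sum.
    transitivity (list_sum (map (fun g => b2n (R A g) + length (filter (fun A0 => R A0 g) B))%nat G)).
    + rewrite sum_map_add. reflexivity.
    + f_equal. apply map_ext. intros g. destruct (R A g); reflexivity.
Qed.

Lemma le_fold_max : forall x l, In x l -> (x <= fold_right max 0 l)%nat.
Proof. induction l; simpl; intros H; [tauto|]. destruct H as [->|H]; [lia|]. specialize (IHl H). lia. Qed.

Lemma fold_max_le : forall c l, (forall x, In x l -> x <= c)%nat -> (fold_right max 0 l <= c)%nat.
Proof. induction l; simpl; intros H; [lia|]. pose proof (H a (or_introl eq_refl)).
  assert (fold_right max 0 l <= c)%nat by (apply IHl; intros; apply H; auto). lia. Qed.

Lemma sum_ge : forall {A} c (f : A -> nat) l, (forall x, In x l -> c <= f x)%nat ->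
  (c * length l <= list_sum (map f l))%nat.
Proof. induction l; simpl; intros H; [lia|]. pose proof (H a (or_introl eq_refl)).
  assert (c * length l <= list_sum (map f l))%nat by (apply IHl; intros; apply H; auto). lia. Qed.

Lemma basis_prop : forall k e, In e (basis k) -> length e = k /\ nz e = true.
Proof.
  induction k; simpl; intros e H; [tauto|]. destruct H as [<-|H].
  - simpl. rewrite repeat_length. auto.
  - apply in_map_iff in H. destruct H as [e' [<- H]]. apply IHk in H. simpl. destruct H; auto.
Qed.

Lemma filter_nil_of : forall {A} (f : A -> bool) l, (forall x, In x l -> f x = false) -> filter f l = [].
Proof. induction l; simpl; intros H; auto. rewrite H by auto. apply IHl. intros; apply H; auto. Qed.

Lemma filter_mono : forall {A} (f g : A -> bool) l, (forall x, In x l -> f x = true -> g x = true) ->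
  (length (filter f l) <= length (filter g l))%nat.
Proof. induction l; simpl; intros H; auto.
  assert (length (filter f l) <= length (filter g l))%nat by (apply IHl; intros; apply H; auto).
  destruct (f a) eqn:E. rewrite (H a (or_introl eq_refl) E). simpl. lia.
  destruct (g a); simpl; lia. Qed.

Lemma map_filter_length : forall {A B} (h : A -> B) (f : B -> bool) l,
  length (filter f (map h l)) = length (filter (fun x => f (h x)) l).
Proof. induction l; simpl; auto. destruct (f (h a)); simpl; auto. Qed.

Definition cols (L : coloring) (A : atom) := nodup Nat.eq_dec (flat_map L (args A)).

Lemma in_cols_atm : forall L u v g, In g (cols L (atm u v)) <->
  In g (L (enc u)) \/ In g (L (enc v)) \/ In g (L (enc (xorv u v))).
Proof. intros. unfold cols. rewrite nodup_In. simpl. rewrite !in_app_iff. simpl. tauto. Qed.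

Lemma valid_closed : forall k L, valid_coloring SS (Qk k) L ->
  forall u v g, In u (Vnz k) -> In v (Vnz k) -> u <> v -> In g (L (enc (xorv u v))) ->
  In g (L (enc u)) \/ In g (L (enc v)).
Proof.
  intros k L HL u v g Hu Hv Huv Hg.
  destruct (HL [enc u; enc v] (enc (xorv u v))) with (c := g) as [x [Hx Hgx]]; auto.
  - exists f1, (atm u v). repeat split; simpl; auto. apply body_In; auto.
  - simpl in Hx. destruct Hx as [<-|[<-|[]]]; auto.
Qed.

Lemma C_bound : forall k L g x0, valid_coloring SS (Qk k) L -> In x0 (Vnz k) -> In g (L (enc x0)) ->
  (2 * length (filter (fun u => negb (memb g (L (enc u)))) (Vnz k)) + 1 <= 2^k - 1)%nat.
Proof.
  intros k L g x0 HL Hx0 Hg.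
  set (inC := fun u => negb (memb g (L (enc u)))).
  set (C := filter inC (Vnz k)).
  pose proof (filter_split_length (fun u => memb g (L (enc u))) (Vnz k)) as Hs.
  rewrite count_nz in Hs.
  assert (length (x0 :: map (xorv x0) C) <= length (filter (fun u => memb g (L (enc u))) (Vnz k)))%nat.
  { apply NoDup_incl_length.
    - constructor.
      + intros H. apply in_map_iff in H. destruct H as [c [Hc HcC]].
        apply filter_In in HcC. destruct HcC as [HcV _]. apply Vnz_In in HcV. apply Vnz_In in Hx0.
        apply (xorv_self_nz x0 c); try tauto; lia.
      + apply Injective_map_NoDup_in.
        * intros a b Ha Hb E. apply filter_In in Ha, Hb. destruct Ha as [Ha _], Hb as [Hb _].
          apply Vnz_In in Ha, Hb. apply Vnz_In in Hx0.
          rewrite <- (xorv_cancel x0 a), <- (xorv_cancel x0 b), E by lia. auto.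
        * apply NoDup_filter, Vnz_NoDup.
    - intros y [<-|Hy].
      + apply filter_In. split; auto. apply memb_spec; auto.
      + apply in_map_iff in Hy. destruct Hy as [c [<- HcC]].
        apply filter_In in HcC. destruct HcC as [HcV Hc]. unfold inC in Hc.
        pose proof HcV as HcV'. apply Vnz_In in HcV'. pose proof Hx0 as Hx0'. apply Vnz_In in Hx0'.
        assert (Hcx : c <> x0). { intros ->. apply memb_spec in Hg. rewrite Hg in Hc. discriminate. }
        assert (Hw : In (xorv x0 c) (Vnz k)).
        { apply Vnz_In. split. rewrite xorv_length; lia.
          destruct (nz (xorv x0 c)) eqn:E; auto. apply nz_xorv in E; [congruence|lia]. }
        apply filter_In. split; auto.
        destruct (memb g (L (enc (xorv x0 c)))) eqn:E; auto. exfalso.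
        assert (Hne : c <> xorv x0 c).
        { rewrite xorv_comm. intros E2. apply (xorv_self_nz c x0); auto; try tauto; lia. }
        destruct (valid_closed k L HL c (xorv x0 c) g HcV Hw Hne) as [H1|H1].
        * rewrite (xorv_comm x0 c), xorv_cancel by lia. auto.
        * apply memb_spec in H1. rewrite H1 in Hc. discriminate.
        * apply memb_spec in H1. rewrite H1 in E. discriminate. }
  simpl in H. rewrite length_map in H. unfold C, inC in H. unfold C, inC. lia.
Qed.

Lemma sum_mul : forall {A} c (f : A -> nat) l, list_sum (map (fun x => c * f x)%nat l) = (c * list_sum (map f l))%nat.
Proof. induction l; simpl; auto. rewrite IHl. lia. Qed.

Lemma filter_filter_le : forall {A} (f g : A -> bool) l,
  (length (filter f (filter g l)) <= length (filter f l))%nat.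
Proof. induction l; simpl; auto. destruct (g a), (f a) eqn:E; simpl; try rewrite E; simpl; lia. Qed.

Lemma miss_bound : forall k L g, let inC := fun u => negb (memb g (L (enc u))) in
  let c := length (filter inC (Vnz k)) in
  (length (filter (fun A => negb (memb g (cols L A))) (bodyk k)) <= c * (c - 1))%nat.
Proof.
  intros k L g inC c. unfold bodyk. rewrite filter_flat_map_length.
  eapply Nat.le_trans.
  - apply (sum_le _ (fun u => if inC u then (c - 1)%nat else 0%nat)).
    intros u Hu. destruct (inC u) eqn:Hi.
    + unfold row. rewrite map_filter_length.
      eapply Nat.le_trans. apply (filter_mono _ (fun v => inC v && negb (veqb u v))).
      * intros v Hv Hm. apply filter_In in Hv. destruct Hv as [_ Hv]. rewrite Hv, andb_true_r.
        unfold inC. destruct (memb g (L (enc v))) eqn:E; auto.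
        apply memb_spec in E. assert (In g (cols L (atm u v))) by (apply in_cols_atm; auto).
        apply memb_spec in H. rewrite H in Hm. discriminate.
      * assert (length (u :: filter (fun v => inC v && negb (veqb u v)) (Vnz k)) <= c)%nat.
        { apply NoDup_incl_length.
          - constructor.
            + intros H. apply filter_In in H. destruct H as [_ H]. apply andb_true_iff in H.
              destruct H as [_ H]. assert (veqb u u = true) by (apply veqb_spec; auto).
              rewrite H0 in H. discriminate.
            + apply NoDup_filter, Vnz_NoDup.
          - intros y [<-|Hy]. apply filter_In; auto.
            apply filter_In in Hy. destruct Hy as [Hy H]. apply andb_true_iff in H.
            apply filter_In; tauto. }
        simpl in H. pose proof (filter_filter_le (fun v => inC v && negb (veqb u v)) (fun v => negb (veqb u v)) (Vnz k)). lia.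
    + unfold row. rewrite filter_nil_of; simpl; auto.
      intros A HA. apply in_map_iff in HA. destruct HA as [v [<- _]].
      unfold inC in Hi. destruct (memb g (L (enc u))) eqn:E; try discriminate.
      apply memb_spec in E. assert (In g (cols L (atm u v))) by (apply in_cols_atm; auto).
      apply memb_spec in H. rewrite H. reflexivity.
  - rewrite sum_if. unfold c. lia.
Qed.

Lemma upper : forall k L, (1 <= k)%nat -> valid_coloring SS (Qk k) L ->
  let N := length (bodyk k) in let M := (2^k - 1)%nat in
  (ncolors L (map enc (basis k)) * (4 * N - (M - 1) * (M - 3)) <= 4 * N * denom L (Qk k))%nat.
Proof.
  intros k L Hk HL N M.
  set (G := nodup Nat.eq_dec (flat_map L (map enc (basis k)))).
  set (B := bodyk k).
  set (R := fun A g => memb g (cols L A)).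
  assert (S1 : (list_sum (map (fun A => length (filter (R A) G)) B) <= N * denom L (Qk k))%nat).
  { eapply Nat.le_trans. apply (sum_le _ (fun _ => denom L (Qk k))).
    - intros A HA. eapply Nat.le_trans.
      + apply (NoDup_incl_length (l' := cols L A)). apply NoDup_filter, NoDup_nodup.
        intros y Hy. apply filter_In in Hy. destruct Hy as [_ Hy]. apply memb_spec; auto.
      + unfold cols, denom. apply le_fold_max. apply in_map_iff. exists A; split; auto.
    - rewrite sum_const. unfold N, B. lia. }
  rewrite sum_swap in S1.
  assert (S2 : forall g, In g G -> (4 * N - (M - 1) * (M - 3) <= 4 * length (filter (fun A => R A g) B))%nat).
  { intros g Hg. unfold G in Hg. rewrite nodup_In, in_flat_map in Hg.
    destruct Hg as [x [Hl Hgl]]. apply in_map_iff in Hl.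
    destruct Hl as [e [<- He]]. apply basis_prop in He.
    assert (HeV : In e (Vnz k)) by (apply Vnz_In; auto).
    pose proof (C_bound k L g e HL HeV Hgl) as Cb.
    pose proof (miss_bound k L g) as Mb. simpl in Mb.
    pose proof (filter_split_length (fun A => R A g) B) as Hs. unfold R in Hs.
    fold B in Mb. unfold R. fold M in Cb.
    set (c := length (filter (fun u => negb (memb g (L (enc u)))) (Vnz k))) in *.
    set (hit := length (filter (fun A => memb g (cols L A)) B)) in *.
    set (miss := length (filter (fun x => negb (memb g (cols L x))) B)) in *.
    assert (4 * (c * (c - 1)) <= (M - 1) * (M - 3))%nat.
    { assert (2 * c <= M - 1)%nat by lia.
      assert (4 * (c * (c - 1)) = (2 * c) * (2 * c - 2))%nat by nia.
      rewrite H0. apply Nat.mul_le_mono; lia. }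
    unfold N. fold B. nia. }
  pose proof (sum_ge _ _ _ S2) as S3.
  assert (S4 : list_sum (map (fun g => 4 * length (filter (fun A => R A g) B)) G)%nat =
     (4 * list_sum (map (fun g => length (filter (fun A => R A g) B)) G))%nat).
  { apply sum_mul. }
  unfold ncolors. fold G. rewrite S4 in S3. revert S1 S3. generalize (list_sum (map (fun g => length (filter (fun A => R A g) B)) G)). intros X S1 S3. nia.
Qed.

Definition Lw k : coloring := fun x => map enc (filter (ip (dec k x)) (allvec k)).

Lemma dec_enc_k : forall k u, length u = k -> dec k (enc u) = u.
Proof. intros k u <-. apply dec_enc. Qed.

Lemma Lw_In1 : forall k u c, length u = k -> In c (Lw k (enc u)) ->
  exists s, c = enc s /\ length s = k /\ ip u s = true.
Proof.
  intros k u c Hu. unfold Lw. rewrite dec_enc_k by auto. rewrite in_map_iff.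
  intros [s [E Hs]]. apply filter_In in Hs. destruct Hs as [Hs Hi]. apply allvec_In in Hs.
  exists s; auto.
Qed.

Lemma Lw_In2 : forall k u s, length u = k -> length s = k -> ip u s = true -> In (enc s) (Lw k (enc u)).
Proof.
  intros k u s Hu Hs Hi. unfold Lw. rewrite dec_enc_k by auto. apply in_map. apply filter_In.
  split; auto. apply allvec_In; auto.
Qed.

Lemma Lw_valid : forall k, valid_coloring SS (Qk k) (Lw k).
Proof.
  intros k X Y [f [A [Hf [HA [Hr [HX HY]]]]]] c Hc.
  simpl in Hf. destruct Hf as [<-|[]].
  apply body_In_inv in HA. destruct HA as [u [v [Hu [Hv [Huv ->]]]]].
  simpl in HX, HY. subst X Y.
  apply Vnz_In in Hu, Hv. destruct Hu as [Hu1 Hu2], Hv as [Hv1 Hv2].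
  destruct (Lw_In1 k (xorv u v) c) as [s [-> [Hs Hi]]]; auto.
  rewrite xorv_length; lia.
  rewrite ip_xorv in Hi by lia.
  destruct (ip u s) eqn:E1.
  - exists (enc u). split. left; auto. apply Lw_In2; auto.
  - exists (enc v). split. right; left; auto. apply Lw_In2; auto.
Qed.

Lemma ip_repeat_false : forall n s, ip (repeat false n) s = false.
Proof. intros; apply ip_zero. induction n; simpl; auto. Qed.

Lemma basis_hit : forall k s, length s = k -> nz s = true -> exists e, In e (basis k) /\ ip e s = true.
Proof.
  induction k; intros [|b s] Hl Hn; simpl in *; try discriminate.
  destruct b.
  - exists (true :: repeat false k). split; auto. simpl. rewrite ip_repeat_false. auto.
  - destruct (IHk s) as [e [He Hi]]; auto.
    exists (false :: e). split; [right; apply in_map; auto|]. simpl. auto.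
Qed.

Lemma enc_inj_Vnz : forall k, NoDup (map enc (Vnz k)).
Proof.
  intros. apply Injective_map_NoDup_in; [|apply Vnz_NoDup].
  intros a b Ha Hb E. apply Vnz_In in Ha, Hb. apply enc_inj; auto. lia.
Qed.

Lemma numer_w : forall k, (2^k - 1 <= ncolors (Lw k) (map enc (basis k)))%nat.
Proof.
  intros k. rewrite <- count_nz, <- (length_map enc). apply NoDup_incl_length.
  apply enc_inj_Vnz.
  intros y Hy. apply in_map_iff in Hy. destruct Hy as [s [<- Hs]]. apply Vnz_In in Hs.
  destruct (basis_hit k s) as [e [He Hi]]; try tauto.
  apply nodup_In, in_flat_map. exists (enc e). split. apply in_map; auto.
  apply basis_prop in He. apply Lw_In2; tauto.
Qed.

Lemma atom_w : forall k A, In A (bodyk k) -> (ncolors (Lw k) (args A) <= 3 * 2^(k-2))%nat.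
Proof.
  intros k A HA. apply body_In_inv in HA. destruct HA as [u [v [Hu [Hv [Huv ->]]]]].
  apply Vnz_In in Hu, Hv.
  pose proof (count_or u v) as Co. destruct Hu as [Hu1 Hu2], Hv as [Hv1 Hv2].
  rewrite Hu1 in Co. rewrite <- Co by (auto; lia).
  rewrite <- length_filter_sum. rewrite <- (length_map enc).
  apply NoDup_incl_length. apply NoDup_nodup.
  intros y Hy. unfold ncolors in Hy. apply nodup_In in Hy. simpl in Hy.
  rewrite !in_app_iff in Hy. simpl in Hy.
  destruct Hy as [Hy|[Hy|[Hy|[]]]].
  - destruct (Lw_In1 k u y) as [s [-> [Hs Hi]]]; auto. apply in_map. apply filter_In.
    rewrite Hi. split; auto. apply allvec_In; auto.
  - destruct (Lw_In1 k v y) as [s [-> [Hs Hi]]]; auto. apply in_map. apply filter_In.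
    rewrite Hi, orb_true_r. split; auto. apply allvec_In; auto.
  - destruct (Lw_In1 k (xorv u v) y) as [s [-> [Hs Hi]]]. rewrite xorv_length; lia. auto.
    apply in_map. apply filter_In. rewrite ip_xorv in Hi by lia.
    split. apply allvec_In; auto. destruct (ip u s), (ip v s); auto.
Qed.

Lemma denom_w : forall k, (denom (Lw k) (Qk k) <= 3 * 2^(k-2))%nat.
Proof.
  intros k. unfold denom. apply fold_max_le. intros x Hx. apply in_map_iff in Hx.
  destruct Hx as [A [<- HA]]. apply atom_w; auto.
Qed.
Open Scope R_scope.

Lemma ratio_le : forall a b c d, (a*d <= c*b)%nat -> (0<b)%nat -> (0<d)%nat -> INR a / INR b <= INR c / INR d.
Proof.
  intros a b c d H Hb Hd. apply le_INR in H. rewrite !mult_INR in H.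
  apply lt_0_INR in Hb, Hd.
  unfold Rdiv. apply (Rmult_le_reg_r (INR b * INR d)). nra.
  replace (INR a * / INR b * (INR b * INR d)) with (INR a * INR d) by (field; lra).
  replace (INR c * / INR d * (INR b * INR d)) with (INR c * INR b) by (field; lra). lra.
Qed.

Lemma pow_split : forall k, (2 <= k)%nat -> (2^k = 4 * 2^(k-2))%nat.
Proof. intros k Hk. replace k with (S (S (k-2))) at 1 by lia. simpl. lia. Qed.

Lemma arith1 : forall nL dL nw dw mm N4 q,
  (nL * mm <= N4 * dL -> nw * mm <= N4 * dw -> 4*q+3 <= nw -> dw <= 3*q+3 ->
   N4 * (3*q+3) = (4*q+3) * mm -> 0 < mm -> 0 < dw -> nL * dw <= nw * dL)%nat.
Proof.
  intros nL dL nw dw mm N4 q H1 H2 H3 H4 H5 H6 H7.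
  assert (A1 : (nL * mm * dw <= N4 * dL * dw)%nat) by (apply Nat.mul_le_mono_r; auto).
  assert (A2 : (N4 * dL * dw <= N4 * (3*q+3) * dL)%nat).
  { rewrite <- !Nat.mul_assoc. apply Nat.mul_le_mono_l. rewrite (Nat.mul_comm dL dw). apply Nat.mul_le_mono_r. auto. }
  rewrite H5 in A2.
  assert (A3 : ((4*q+3) * mm * dL <= nw * mm * dL)%nat) by (apply Nat.mul_le_mono_r, Nat.mul_le_mono_r; auto).
  assert (A4 : (nL * dw * mm <= nw * dL * mm)%nat).
  { replace (nL * dw * mm)%nat with (nL * mm * dw)%nat by ring.
    replace (nw * dL * mm)%nat with (nw * mm * dL)%nat by ring. lia. }
  apply Nat.mul_le_mono_pos_r in A4; auto.
Qed.

Lemma arith2 : forall nw dw mm N4 q,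
  (nw * mm <= N4 * dw -> N4 * (3*q+3) = (4*q+3) * mm -> 0 < mm -> 3 * nw <= 4 * dw)%nat.
Proof.
  intros nw dw mm N4 q H1 H2 H3.
  assert (A1 : (3*nw * mm * (4*q+3) <= 3 * N4 * dw * (4*q+3))%nat).
  { replace (3*nw*mm*(4*q+3))%nat with (3*(4*q+3)*(nw*mm))%nat by ring.
    replace (3*N4*dw*(4*q+3))%nat with (3*(4*q+3)*(N4*dw))%nat by ring.
    apply Nat.mul_le_mono_l; auto. }
  assert (A2 : (3 * N4 * dw * (4*q+3) <= 4 * dw * mm * (4*q+3))%nat).
  { replace (3 * N4 * dw * (4*q+3))%nat with (dw * (4*q+3) * (N4*3))%nat by ring.
    replace (4 * dw * mm * (4*q+3))%nat with (dw * (4*q+3) * (4 * mm))%nat by ring.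
    apply Nat.mul_le_mono_l.
    assert (N4 * 3 * (q+1) = (4*q+3) * mm)%nat by (rewrite <- H2; ring).
    assert (N4 * 3 * (q+1) <= 4 * mm * (q+1))%nat by (rewrite H; replace (4*mm*(q+1))%nat with ((4*q+4)*mm)%nat by ring; apply Nat.mul_le_mono_r; lia).
    apply Nat.mul_le_mono_pos_r in H0; lia. }
  assert (A3 : (3*nw * (mm * (4*q+3)) <= 4*dw * (mm*(4*q+3)))%nat).
  { rewrite !Nat.mul_assoc. lia. }
  apply Nat.mul_le_mono_pos_r in A3; auto. lia.
Qed.

Lemma color_k : forall k, (2 <= k)%nat -> exists c, color_number SS (Qk k) c /\ c <= 4/3.
Proof.
  intros k Hk.
  pose proof (pow_split k Hk) as P.
  assert (Hp : (1 <= 2^(k-2))%nat) by (pose proof (Nat.pow_nonzero 2 (k-2)); lia).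
  destruct (2^(k-2))%nat as [|q] eqn:Eq; [lia|]. clear Hp.
  pose proof (body_length k) as BL. rewrite P in BL.
  replace (4 * S q - 1)%nat with (4*q+3)%nat in BL by lia.
  replace (4 * S q - 2)%nat with (4*q+2)%nat in BL by lia.
  pose proof (upper k (Lw k) ltac:(lia) (Lw_valid k)) as Uw. cbv zeta in Uw.
  rewrite BL, P in Uw.
  replace (4 * S q - 1 - 1)%nat with (4*q+2)%nat in Uw by lia.
  replace (4 * S q - 1 - 3)%nat with (4*q)%nat in Uw by lia.
  assert (Emm : (4 * ((4*q+3) * (4*q+2)) - (4*q+2) * (4*q) = (4*q+2)*(12*q+12))%nat).
  { assert (4 * ((4*q+3) * (4*q+2)) = (4*q+2) * (4*q) + (4*q+2)*(12*q+12))%nat by ring.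
    rewrite H, Nat.add_comm, Nat.add_sub. reflexivity. }
  rewrite Emm in Uw.
  pose proof (numer_w k) as Nw. rewrite P in Nw. replace (4 * S q - 1)%nat with (4*q+3)%nat in Nw by lia.
  pose proof (denom_w k) as Dw. rewrite Eq in Dw. replace (3 * S q)%nat with (3*q+3)%nat in Dw by lia.
  set (nw := ncolors (Lw k) (map enc (basis k))) in *.
  set (dw := denom (Lw k) (Qk k)) in *.
  set (mm := ((4*q+2)*(12*q+12))%nat) in *.
  set (N4 := (4 * ((4*q+3) * (4*q+2)))%nat) in *.
  assert (Hid : (N4 * (3*q+3) = (4*q+3) * mm)%nat) by (unfold N4, mm; ring).
  assert (Hmm : (0 < mm)%nat) by (unfold mm; lia).
  assert (Hdw : (0 < dw)%nat).
  { destruct dw; [|lia]. rewrite Nat.mul_0_r in Uw. assert (nw * mm = 0)%nat by lia.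
    apply Nat.mul_eq_0 in H. lia. }
  exists (ratio (Lw k) (Qk k)). split; [split|].
  - exists (Lw k). split; [apply Lw_valid|]. split; auto.
  - intros L HL HdL. unfold ratio. change (Defs.head (Qk k)) with (map enc (basis k)).
    pose proof (upper k L ltac:(lia) HL) as UL. cbv zeta in UL. rewrite BL, P in UL.
    replace (4 * S q - 1 - 1)%nat with (4*q+2)%nat in UL by lia.
    replace (4 * S q - 1 - 3)%nat with (4*q)%nat in UL by lia.
    fold N4 in UL. rewrite Emm in UL.
    apply ratio_le; auto. eapply arith1; eauto.
  - unfold ratio. change (Defs.head (Qk k)) with (map enc (basis k)). fold nw. fold dw.
    pose proof (arith2 nw dw mm N4 q Uw Hid Hmm) as H.
    apply le_INR in H. rewrite !mult_INR in H. simpl in H.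
    apply lt_0_INR in Hdw. unfold Rdiv. apply (Rmult_le_reg_r (INR dw)); auto.
    rewrite Rmult_assoc, Rinv_l by lra. lra.
Qed.

Definition DD : database := fun R => match R with
  | 0%nat => [[0;0;0];[0;1;1];[1;0;1];[1;1;0]]%nat | _ => [] end.

Lemma DD_fd : fd_sat DD f1.
Proof.
  intros t t' Ht Ht' H. simpl in Ht, Ht'.
  pose proof (H 0%nat (or_introl eq_refl)) as H0. pose proof (H 1%nat (or_intror (or_introl eq_refl))) as H1.
  destruct Ht as [<-|[<-|[<-|[<-|[]]]]]; destruct Ht' as [<-|[<-|[<-|[<-|[]]]]];
    simpl in *; try reflexivity; try discriminate.
Qed.

Lemma basis_length : forall k, length (basis k) = k.
Proof. induction k; simpl; auto. rewrite length_map; auto. Qed.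

Lemma basis_ip : forall k s, length s = k -> map (fun e => ip e s) (basis k) = s.
Proof.
  induction k; intros [|b s] H; simpl in *; try discriminate; auto.
  rewrite ip_repeat_false, map_map. simpl. f_equal. destruct b; auto.
  apply IHk. lia.
Qed.

Lemma other_vec : forall k e, (2 <= k)%nat -> In e (Vnz k) -> exists v, In v (Vnz k) /\ v <> e.
Proof.
  intros k e Hk He. pose proof (filter_neq_length e (Vnz k) (Vnz_NoDup k) He) as L.
  rewrite count_nz in L.
  assert (2^2 <= 2^k)%nat by (apply Nat.pow_le_mono_r; lia). simpl in H.
  destruct (filter (fun v => negb (veqb e v)) (Vnz k)) as [|v l] eqn:E; simpl in L; [lia|].
  assert (In v (filter (fun v => negb (veqb e v)) (Vnz k))) by (rewrite E; left; auto).
  apply filter_In in H0. destruct H0 as [Hv Hn]. exists v. split; auto. intros ->.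
  assert (veqb e e = true) by (apply veqb_spec; auto). rewrite H0 in Hn. discriminate.
Qed.

Definition ansk k := map (map b2n) (allvec k).

Lemma b2n_inj : Injective b2n.
Proof. intros [] []; simpl; auto; discriminate. Qed.

Lemma map_b2n_inj : Injective (map b2n).
Proof. intros x. induction x; intros [|b y] H; simpl in *; try discriminate; auto.
  injection H; intros. f_equal. apply b2n_inj; auto. apply IHx; auto. Qed.

Lemma answers : forall k, (2 <= k)%nat -> answer_card (Qk k) DD (2^k).
Proof.
  intros k Hk. exists (ansk k). split; [|split].
  - apply Injective_map_NoDup. apply map_b2n_inj. apply allvec_NoDup.
  - intros t. split.
    + intros Ht. unfold ansk in Ht. apply in_map_iff in Ht. destruct Ht as [s [<- Hs]].
      apply allvec_In in Hs.
      exists (fun x => b2n (ip (dec k x) s)). split.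
      * intros A HA. apply body_In_inv in HA. destruct HA as [u [v [Hu [Hv [Huv ->]]]]].
        apply Vnz_In in Hu, Hv. destruct Hu as [Hu _], Hv as [Hv _]. simpl.
        rewrite !dec_enc_k by (try rewrite xorv_length; lia).
        rewrite ip_xorv by lia. destruct (ip u s), (ip v s); simpl; tauto.
      * simpl. rewrite map_map. rewrite <- (basis_ip k s Hs) at 1. rewrite map_map.
        apply map_ext_in. intros e He. apply basis_prop in He. rewrite dec_enc_k; tauto.
    + intros [theta [Hb Ht]].
      assert (H01 : forall e, In e (basis k) -> theta (enc e) = 0%nat \/ theta (enc e) = 1%nat).
      { intros e He. apply basis_prop in He. assert (HeV : In e (Vnz k)) by (apply Vnz_In; auto).
        destruct (other_vec k e Hk HeV) as [v [Hv Hne]].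
        pose proof (Hb _ (body_In k e v HeV Hv (not_eq_sym Hne))) as H. simpl in H.
        destruct H as [H|[H|[H|[H|[]]]]]; injection H; intros; lia. }
      subst t. unfold ansk. apply in_map_iff.
      exists (map (fun e => Nat.eqb (theta (enc e)) 1) (basis k)). split.
      * simpl. rewrite !map_map. apply map_ext_in. intros e He.
        destruct (H01 e He) as [E|E]; rewrite E; reflexivity.
      * apply allvec_In. rewrite length_map, basis_length. auto.
  - unfold ansk. rewrite length_map, allvec_length. auto.
Qed.

Lemma rmax_k : forall k, (2 <= k)%nat -> rmax (Qk k) DD = 4%nat.
Proof.
  intros k Hk. unfold rmax. simpl.
  assert (E: forall l, (forall A, In A l -> rel A = 0%nat) -> l <> [] ->
     fold_right max 0%nat (map (fun A => rel_size DD (rel A)) l) = 4%nat).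
  { induction l as [|A l IH]; intros H Hn; [congruence|]. simpl. rewrite H by (left; auto).
    destruct l. simpl. vm_compute. reflexivity. rewrite IH. vm_compute. reflexivity. intros; apply H; right; auto. discriminate. }
  apply E.
  - intros A HA. apply body_In_inv in HA. destruct HA as [u [v [_ [_ [_ ->]]]]]. reflexivity.
  - assert (He : In (true :: repeat false (k-1)) (Vnz k)).
    { apply Vnz_In. simpl. rewrite repeat_length. split; auto. lia. }
    destruct (other_vec k _ Hk He) as [v [Hv Hne]].
    pose proof (body_In k _ v He Hv (not_eq_sym Hne)). intros E'. rewrite E' in H. auto.
Qed.

Lemma no_chase : forall k, ~ (exists Q'', chase_step SS (Qk k) Q'').
Proof.
  intros k [Q'' [f [A1 [A2 [Hf [H1 [H2 [_ [_ [Hlhs [Hne _]]]]]]]]]]].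
  simpl in Hf. destruct Hf as [<-|[]].
  apply body_In_inv in H1, H2. destruct H1 as [u1 [v1 [Hu1 [Hv1 [_ ->]]]]].
  destruct H2 as [u2 [v2 [Hu2 [Hv2 [_ ->]]]]].
  apply Vnz_In in Hu1, Hv1, Hu2, Hv2.
  pose proof (Hlhs 0%nat (or_introl eq_refl)) as E0. pose proof (Hlhs 1%nat (or_intror (or_introl eq_refl))) as E1.
  simpl in E0, E1, Hne. apply enc_inj in E0; [|lia]. apply enc_inj in E1; [|lia]. subst. auto.
Qed.

Lemma wf_all : forall k, wf_query (fun _ => 3%nat) (Qk k) /\ wf_db (fun _ => 3%nat) DD /\ Forall (wf_fd (fun _ => 3%nat)) SS.
Proof.
  intros k. split; [|split].
  - intros A HA. apply body_In_inv in HA. destruct HA as [u [v [_ [_ [_ ->]]]]]. reflexivity.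
  - intros [|R] t Ht; simpl in Ht; [|tauto]. destruct Ht as [<-|[<-|[<-|[<-|[]]]]]; reflexivity.
  - constructor; [|constructor]. split; simpl; [|lia]. intros p [<-|[<-|[]]]; lia.
Qed.

Theorem theorem4p2 : forall alpha : R,
  exists (ar : nat -> nat) (S : list fd) (Q : cq) (D : database),
    wf_query ar Q /\ wf_db ar D /\ Forall (wf_fd ar) S /\ Forall (fd_sat D) S /\
    exists (Qc : cq) (c : R) (n : nat),
      is_chase S Q Qc /\ color_number S Qc c /\ answer_card Q D n /\
      INR n > Rpower (INR (rmax Q D)) (alpha * c).
Proof.
  intros alpha.
  destruct (INR_unbounded (4 * Rabs alpha)) as [n Hn].
  set (k := (n + 2)%nat).
  assert (Hk : (2 <= k)%nat) by (unfold k; lia).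
  destruct (wf_all k) as [W1 [W2 W3]].
  exists (fun _ => 3%nat), SS, (Qk k), DD. split; [|split; [|split; [|split]]]; auto.
  - constructor; [apply DD_fd|constructor].
  - destruct (color_k k Hk) as [c [Hc Hc43]].
    exists (Qk k), c, (2^k)%nat. split; [|split; [|split]]; auto.
    + split; [apply rt_refl|apply no_chase].
    + apply answers; auto.
    + assert (Hc0 : 0 <= c).
      { destruct Hc as [[L [_ [Hd <-]]] _]. unfold ratio. unfold Rdiv.
        apply Rmult_le_pos; [apply pos_INR|]. left. apply Rinv_0_lt_compat, lt_0_INR; auto. }
      rewrite rmax_k by auto.
      assert (E4 : INR 4 = Rpower 2 2).
      { replace 2 with (INR 2) at 2 by reflexivity. rewrite Rpower_pow by lra. simpl. ring. }
      rewrite E4, Rpower_mult, pow_INR.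
      replace (INR 2) with 2 by reflexivity.
      rewrite <- Rpower_pow by lra.
      apply Rpower_lt; [lra|].
      assert (alpha * c <= Rabs alpha * (4/3)).
      { apply Rle_trans with (Rabs alpha * c).
        - apply Rmult_le_compat_r; auto. apply Rle_abs.
        - apply Rmult_le_compat_l; auto. apply Rabs_pos. }
      assert (INR n <= INR k) by (apply le_INR; unfold k; lia).
      pose proof (Rabs_pos alpha). lra.
Qed.
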